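(* Every precompact subset $A$ of the Banach space $c_0$ has finite entropy; moreover $\mathbf E(A)=\mathbf E_0(A)=\sup_{x\in A}\|x\|$.
   Context: $c_0$ is the real Banach space of null sequences with the supremum norm. A brick in a Banach space $X$ is a set $K_{\mathcal B,\mathcal E}=\{x\in X:\ |e_n^*(x)|\le\varepsilon_n\ \forall n\}$, where $\mathcal B=(e_n)$ is a normalized Schauder basis with biorthogonal functionals $(e_n^* )$ and $\varepsilon_n\ge0$; its unconditional radius is $r^{\rm unc}(K_{\mathcal B,\mathcal E})=\sup_{\theta_n=\pm1}\|\sum_n\theta_n\varepsilon_ne_n\|$ (norm of a divergent series $=\infty$). The entropy $\mathbf E(A)$ is the infimum of $r^{\rm unc}$ over all bricks containing $A$; the unconditional entropy $\mathbf E_0(A)$ is the same infimum over bricks built on $1$-unconditional bases (i.e. $\|\sum_n\theta_ne_n^*(x)e_n\|\le\|x\|$ for all $x$ and all signs $\theta_n=\pm1$); an empty infimum is $\infty$. A set is precompact if for every $\varepsilon>0$ it contains a finite $\varepsilon$-net. *)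

(* Defs.v *)
From mathcomp Require Import all_boot all_order all_algebra.
From mathcomp Require Import all_classical all_reals all_analysis.
Set Implicit Arguments. Unset Strict Implicit. Unset Printing Implicit Defensive.
Import Order.TTheory GRing.Theory Num.Theory.
Local Open Scope classical_set_scope.
Local Open Scope ring_scope.

Section C0.
Variable R : realType.

Definition c0 : set (nat -> R) := [set x : nat -> R | x @ \oo --> 0].

Definition nrm (x : nat -> R) : \bar R :=
  ereal_sup [set (`|x k|)%:E | k in [set: nat]].

Definition psum (a : nat -> R) (e : nat -> nat -> R) (N : nat) : nat -> R :=
  fun k => \sum_(n < N) a n * e n k.

Definition series_to (a : nat -> R) (e : nat -> nat -> R) (x : nat -> R) :=
  forall eps : R, 0 < eps -> exists N : nat, forall M : nat, (N <= M)%N ->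
    (nrm (fun k => (psum a e M k - x k)%R) < eps%:E)%E.

(* || sum_n a_n e_n ||, with the convention that the norm of a series
   not converging in c_0 is +oo (the limit is unique, so the set below is
   empty or a singleton; ereal_inf of the empty set is +oo). *)
Definition series_norm (a : nat -> R) (e : nat -> nat -> R) : \bar R :=
  ereal_inf [set r | exists y, c0 y /\ series_to a e y /\ r = nrm y].

(* Schauder basis of c_0 : every x in c_0 has a unique norm-convergent
   expansion x = sum_n a_n e_n; a_n = e_n^*(x) (biorthogonal functionals). *)
Definition schauder_basis (e : nat -> nat -> R) :=
  (forall n, c0 (e n)) /\
  (forall x, c0 x -> exists! a : nat -> R, series_to a e x).

Definition normalized (e : nat -> nat -> R) := forall n, nrm (e n) = 1%:E.

Definition signs : set (nat -> R) := [set t | forall n, t n = 1 \/ t n = -1].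

Definition one_unconditional (e : nat -> nat -> R) :=
  forall x a, c0 x -> series_to a e x ->
  forall t, signs t -> (series_norm (fun n => (t n * a n)%R) e <= nrm x)%E.

Definition brick (e : nat -> nat -> R) (eps : nat -> R) : set (nat -> R) :=
  [set x | c0 x /\ exists a, series_to a e x /\ forall n, `|a n| <= eps n].

Definition r_unc (e : nat -> nat -> R) (eps : nat -> R) : \bar R :=
  ereal_sup [set series_norm (fun n => t n * eps n) e | t in signs].

Definition entropy (A : set (nat -> R)) : \bar R :=
  ereal_inf [set r | exists e eps, schauder_basis e /\ normalized e /\
    (forall n, 0 <= eps n) /\ A `<=` brick e eps /\ r = r_unc e eps].

Definition entropy0 (A : set (nat -> R)) : \bar R :=
  ereal_inf [set r | exists e eps, schauder_basis e /\ normalized e /\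
    one_unconditional e /\
    (forall n, 0 <= eps n) /\ A `<=` brick e eps /\ r = r_unc e eps].

Definition precompact_c0 (A : set (nat -> R)) :=
  forall eps : R, 0 < eps -> exists s : seq (nat -> R),
    (forall y, y \in s -> A y) /\
    (forall x, A x -> exists2 y, y \in s & (nrm (fun k => (x k - y k)%R) < eps%:E)%E).

(* sup_{x in A} ||x||, with sup over the empty set = 0 (norms are >= 0) *)
Definition sup_norm (A : set (nat -> R)) : \bar R :=
  ereal_sup (0%E |` [set nrm x | x in A]).

End C0.

(* Main.v *)
Require Import Defs.
From mathcomp Require Import all_boot all_order all_algebra.
From mathcomp Require Import all_classical all_reals all_analysis.
From mathcomp Require Import ring lra.
Import Order.TTheory GRing.Theory Num.Theory.
Local Open Scope classical_set_scope.
Local Open Scope ring_scope.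

Section S.
Variable R : realType.
Implicit Types (a t : nat -> R) (e : nat -> nat -> R).
Implicit Types x y : nat -> R.

Lemma c0P x : c0 x <-> forall d : R, 0 < d -> exists N, forall k, (N <= k)%N -> `|x k| < d.
Proof.
rewrite /c0 /=; split.
  move=> /cvgrPdist_lt H d d0; have [N _ HN] := H d d0.
  by exists N => k Hk; have := HN k Hk; rewrite sub0r normrN.
move=> H; apply/cvgrPdist_lt => d d0; have [N HN] := H d d0.
by exists N => // k Hk /=; rewrite sub0r normrN; apply: HN.
Qed.

Lemma nrm_ge x k : ((`|x k|)%:E <= nrm x)%E.
Proof. by apply: ereal_sup_ubound; exists k. Qed.

Lemma nrm_ge0 x : (0 <= nrm x)%E.
Proof. by apply: le_trans (nrm_ge x 0). Qed.

Lemma nrm_le x (b : \bar R) : (forall k, ((`|x k|)%:E <= b)%E) -> (nrm x <= b)%E.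
Proof. by move=> H; apply: ge_ereal_sup => _ [k _ <-]. Qed.
Lemma nrm_lt x (d : R) : (nrm x < d%:E)%E -> forall k, `|x k| < d.
Proof. by move=> H k; rewrite -lte_fin; apply: le_lt_trans (nrm_ge x k) H. Qed.

Lemma c0_fin x : c0 x -> (nrm x < +oo)%E.
Proof.
move=> /c0P /(_ 1 ltr01) [N HN].
apply: (@le_lt_trans _ _ ((1 + \sum_(k < N) `|x k|)%:E)); last exact: ltry.
apply: nrm_le => k; rewrite lee_fin.
case: (leqP N k) => Hk.
  apply: le_trans (ltW (HN k Hk)) _; rewrite lerDl; exact: sumr_ge0.
apply: le_trans (_ : \sum_(j < N) `|x j| <= _); last by rewrite lerDr.
rewrite (bigD1 (Ordinal Hk)) //= lerDl; exact: sumr_ge0.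
Qed.

Definition ecan : nat -> nat -> R := fun n k => (n == k)%:R.

Lemma psum_can a M k : psum a ecan M k = if (k < M)%N then a k else 0.
Proof.
rewrite /psum /ecan; elim: M => [|M IH]; first by rewrite big_ord0.
rewrite big_ord_recr /= IH.
have -> : (k < M.+1)%N = (k == M) || (k < M)%N by rewrite ltnS leq_eqVlt.
case: (eqVneq k M) => [->|kM] /=.
  by rewrite ltnn mulr1 add0r.
by rewrite mulr0 addr0.
Qed.

Lemma series_can x : c0 x -> series_to x ecan x.
Proof.
move=> /c0P Hx d d0; have [N HN] := Hx (d/2) (divr_gt0 d0 (ltr0Sn _ 1)).
exists N => M HM; apply: (@le_lt_trans _ _ (d/2)%:E); last first.
  by rewrite lte_fin ltr_pdivrMr // ltr_pMr // ltr1n.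
apply: nrm_le => k; rewrite psum_can lee_fin.
case: ifP => Hk; first by rewrite subrr normr0 ltW // divr_gt0.
rewrite sub0r normrN ltW // HN //; apply: leq_trans HM _; by rewrite leqNgt Hk.
Qed.

Lemma series_can_uniq a x : series_to a ecan x -> a = x.
Proof.
move=> H; apply/funext => k; apply/eqP; rewrite -subr_eq0 -normr_le0.
apply/ler_addgt0Pr => d d0; rewrite add0r.
have [N HN] := H d d0.
have := @nrm_lt _ _ (HN (maxn N k.+1) (leq_maxl _ _)) k.
by rewrite psum_can leq_max ltnSn orbT => /ltW.
Qed.

Lemma ecan_c0 n : c0 (ecan n).
Proof.
apply/c0P => d d0; exists n.+1 => k Hk; rewrite /ecan.
have -> : (n == k) = false by apply/negbTE; rewrite neq_ltn Hk ?orbT.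
by rewrite normr0.
Qed.
Lemma ecan_norm : normalized ecan.
Proof.
move=> n; apply/eqP; rewrite eq_le; apply/andP; split.
  by apply: nrm_le => k; rewrite /ecan lee_fin; case: (n == k); rewrite ?normr1 ?normr0.
by apply: le_trans (nrm_ge _ n); rewrite /ecan eqxx normr1.
Qed.

Lemma signs_norm t k (y : R) : signs t -> `|t k * y| = `|y|.
Proof. by move=> /(_ k) [] ->; rewrite ?mul1r // mulN1r normrN. Qed.

Lemma c0_signs t x : signs t -> c0 x -> c0 (fun k => t k * x k).
Proof.
move=> st /c0P H; apply/c0P => d d0; have [N HN] := H d d0.
by exists N => k Hk; rewrite signs_norm //; apply: HN.
Qed.

Lemma nrm_signs t x : signs t -> nrm (fun k => t k * x k) = nrm x.
Proof.
move=> st; apply/eqP; rewrite eq_le; apply/andP; split.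
  by apply: nrm_le => k; rewrite signs_norm //; apply: nrm_ge.
by apply: nrm_le => k; rewrite -(@signs_norm t k (x k) st); apply: (nrm_ge (fun k => t k * x k)).
Qed.

Lemma series_norm_le a e y : c0 y -> series_to a e y -> (series_norm a e <= nrm y)%E.
Proof. by move=> cy sy; apply: ereal_inf_lbound; exists y. Qed.

Lemma series_norm_ge0 a e : (0 <= series_norm a e)%E.
Proof. by apply: le_ereal_inf_tmp => _ [y [_ [_ ->]]]; apply: nrm_ge0. Qed.

Lemma ecan_schauder : schauder_basis ecan.
Proof.
split; first exact: ecan_c0.
move=> x cx; exists x; split; first exact: series_can.
by move=> a /series_can_uniq.
Qed.

Lemma ecan_unc : one_unconditional ecan.
Proof.
move=> x a cx /series_can_uniq -> t st.
rewrite -(@nrm_signs t x st); apply: series_norm_le; first exact: c0_signs.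
by apply: series_can; apply: c0_signs.
Qed.
Lemma brick_coord e eps x k : brick e eps x -> ((`|x k|)%:E <= r_unc e eps)%E.
Proof.
case => cx [a [sx ha]].
pose th := fun n => (if 0 <= e n k then 1 else -1 : R).
have sth : signs th by move=> n; rewrite /th; case: ifP; [left|right].
apply: (@le_trans _ _ (series_norm (fun n => th n * eps n) e)); last first.
  by apply: ereal_sup_ubound; exists th.
apply: le_ereal_inf_tmp => _ [y [cy [sy ->]]].
apply: le_trans (nrm_ge y k); rewrite lee_fin.
apply/ler_addgt0Pr => d d0.
have d2 : 0 < d / 2 by apply: divr_gt0.
have [N1 H1] := sx _ d2; have [N2 H2] := sy _ d2.
pose M := maxn N1 N2.
have h1 := @nrm_lt _ _ (H1 M (leq_maxl _ _)) k.
have h2 := @nrm_lt _ _ (H2 M (leq_maxr _ _)) k.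
have hp : `|psum a e M k| <= psum (fun n => th n * eps n) e M k.
  rewrite /psum; apply: le_trans (ler_norm_sum _ _ _) _; apply: ler_sum => n _.
  rewrite normrM mulrAC.
  have -> : th n * e n k = `|e n k|.
    rewrite /th; case: ifP => h; first by rewrite mul1r ger0_norm.
    by rewrite mulN1r ltr0_norm // ltNge h.
  by rewrite [X in _ <= X]mulrC; apply: ler_wpM2r.
set p := psum a e M k in h1 hp *.
set q := psum _ e M k in h2 hp *.
have t1 : `|x k| <= `|p| + `|p - x k|.
  have {1}-> : x k = p - (p - x k) by ring.
  by apply: ler_normB.
have t2 : q <= `|q - y k| + `|y k|.
  apply: le_trans (ler_norm q) _.
  have {1}-> : q = (q - y k) + y k by ring.
  by apply: ler_normD.
lra.
Qed.
Lemma sup_norm_le_runc e eps (A : set (nat -> R)) :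
  A `<=` brick e eps -> (sup_norm A <= r_unc e eps)%E.
Proof.
move=> HA; apply: ge_ereal_sup => _ [->|[x Ax <-]].
  apply: le_trans (series_norm_ge0 (fun n => 1 * eps n) e) _.
  by apply: ereal_sup_ubound; exists (fun _ => 1) => //; move=> n; left.
by apply: nrm_le => k; apply: brick_coord; apply: HA.
Qed.

Lemma sum_ge_mem (s : seq (nat -> R)) y k : y \in s -> `|y k| <= \sum_(z <- s) `|z k|.
Proof.
elim: s => [//|z s IH]; rewrite in_cons big_cons => /orP [/eqP ->|ys].
  by rewrite lerDl; apply: sumr_ge0.
by apply: le_trans (IH ys) _; rewrite lerDr.
Qed.

Lemma finite_net_c0 (s : seq (nat -> R)) : (forall y, y \in s -> c0 y) ->
  forall d : R, 0 < d -> exists N, forall y, y \in s -> forall k, (N <= k)%N -> `|y k| < d.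
Proof.
elim: s => [|z s IH] H d d0; first by exists 0%N.
have [N1 H1] : exists N, forall y, y \in s -> forall k, (N <= k)%N -> `|y k| < d.
  by apply: IH => // y ys; apply: H; rewrite in_cons ys orbT.
have /c0P H2 := H z (mem_head _ _).
have [N2' H2'] := H2 d d0.
exists (maxn N1 N2') => y; rewrite in_cons => /orP [/eqP ->|ys] k Hk.
  by apply: H2'; apply: leq_trans Hk; apply: leq_maxr.
by apply: H1 => //; apply: leq_trans Hk; apply: leq_maxl.
Qed.
Lemma eps_exists (A : set (nat -> R)) : A `<=` @c0 R -> precompact_c0 A ->
  exists eps : nat -> R, (forall k, 0 <= eps k) /\ (forall x k, A x -> `|x k| <= eps k)
   /\ c0 eps /\ (forall k, ((eps k)%:E <= sup_norm A)%E).
Proof.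
move=> Ac0 pc.
have [s [sA sn]] := pc 1 ltr01.
pose S k := ereal_sup ([set 0%E] `|` [set (`|x k|)%:E | x in A]).
have S0 k : (0 <= S k)%E by apply: ereal_sup_ubound; left.
have Sx x k : A x -> ((`|x k|)%:E <= S k)%E.
  by move=> Ax; apply: ereal_sup_ubound; right; exists x.
have Sfin k : S k \is a fin_num.
  rewrite ge0_fin_numE //.
  apply: (@le_lt_trans _ _ (1 + \sum_(z <- s) `|z k|)%:E); last exact: ltry.
  apply: ge_ereal_sup => _ [->|[x Ax <-]].
    by rewrite lee_fin; apply: addr_ge0 => //; apply: sumr_ge0.
  have [y ys hy] := sn x Ax.
  have h1 := @nrm_lt _ _ hy k.
  have h2 := @sum_ge_mem s y k ys.
  have t : `|x k| <= `|x k - y k| + `|y k|.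
    have {1}-> : x k = (x k - y k) + y k by ring.
    exact: ler_normD.
  rewrite lee_fin; lra.
exists (fun k => fine (S k)); split; first by move=> k; apply: fine_ge0.
split; first by move=> x k Ax; rewrite -lee_fin fineK //; apply: Sx.
split.
  apply/c0P => d d0.
  have d4 : 0 < d / 4 by apply: divr_gt0.
  have [s' [sA' sn']] := pc _ d4.
  have [N HN] := @finite_net_c0 s' (fun y ys => Ac0 y (sA' y ys)) _ d4.
  exists N => k Hk.
  have : (S k <= (d / 2)%:E)%E.
    apply: ge_ereal_sup => _ [->|[x Ax <-]].
      by rewrite lee_fin; apply: ltW; apply: divr_gt0.
    have [y ys hy] := sn' x Ax.
    have h1 := @nrm_lt _ _ hy k.
    have h2 := HN y ys k Hk.
    have t : `|x k| <= `|x k - y k| + `|y k|.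
      have {1}-> : x k = (x k - y k) + y k by ring.
      exact: ler_normD.
    rewrite lee_fin; lra.
  move=> h; have h' : fine (S k) <= d / 2 by rewrite -lee_fin fineK.
  rewrite ger0_norm; last exact: fine_ge0.
  lra.
move=> k; rewrite fineK //; apply: ge_ereal_sup => _ [->|[x Ax <-]].
  by apply: ereal_sup_ubound; left.
apply: le_trans (nrm_ge x k) _.
by apply: ereal_sup_ubound; right; exists x.
Qed.
End S.

Theorem proposition4p9 (R : realType) (A : set (nat -> R)) :
  A `<=` @c0 R -> precompact_c0 A ->
  (entropy A < +oo)%E /\ entropy A = sup_norm A /\ entropy0 A = sup_norm A.
Proof.
move=> Ac0 pc.
have [eps [e0 [ex [ce esup]]]] := @eps_exists R A Ac0 pc.
have Hb : A `<=` brick (@ecan R) eps.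
  move=> x Ax; split; first exact: Ac0.
  by exists x; split; [apply: series_can; apply: Ac0 | move=> n; apply: ex].
have Hr : (r_unc (@ecan R) eps <= nrm eps)%E.
  apply: ge_ereal_sup => _ [t st <-].
  rewrite -(@nrm_signs R t eps st); apply: series_norm_le; first exact: c0_signs.
  by apply: series_can; apply: c0_signs.
have Hn : (nrm eps <= sup_norm A)%E.
  by apply: nrm_le => k; rewrite ger0_norm.
have E0 : (entropy0 A <= r_unc (@ecan R) eps)%E.
  apply: ereal_inf_lbound; exists (@ecan R), eps; split; first exact: ecan_schauder.
  by split; [exact: ecan_norm | split; [exact: ecan_unc|]].
have E : (entropy A <= r_unc (@ecan R) eps)%E.
  apply: ereal_inf_lbound; exists (@ecan R), eps; split; first exact: ecan_schauder.
  by split; [exact: ecan_norm|].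
have L : (sup_norm A <= entropy A)%E.
  by apply: le_ereal_inf_tmp => _ [e [ep [_ [_ [_ [HA ->]]]]]]; apply: sup_norm_le_runc.
have L0 : (sup_norm A <= entropy0 A)%E.
  by apply: le_ereal_inf_tmp => _ [e [ep [_ [_ [_ [_ [HA ->]]]]]]]; apply: sup_norm_le_runc.
split; first by apply: (le_lt_trans E); apply: (le_lt_trans Hr); apply: (@c0_fin R).
split; apply/eqP; rewrite eq_le; apply/andP; split => //.
  exact: (le_trans E (le_trans Hr Hn)).
exact: (le_trans E0 (le_trans Hr Hn)).
Qed.
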